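(* Let $\mathcal{T} = \{T_1, \ldots, T_t\}$ be a set of unrooted binary phylogenetic trees on a common leaf set $X$, let $\mathcal{Q}$ be the set of quartets that are incompatible quartets of $T_1$ and $T_i$ for some $2 \le i \le t$, and let $\tilde x$ be an optimal solution of the linear program $$\text{minimize } \sum_{e \in E(T_1)} x_e \quad \text{s.t. } \sum_{e \in L(Q)} x_e \ge 1 \ \ \forall Q \in \mathcal{Q}, \qquad x_e \ge 0\ \ \forall e \in E(T_1).$$ Let $E \subseteq E(T_1)$ be the edge set produced by the following rounding procedure. Root $T_1$ at an arbitrary leaf $r$; for each edge $e$ let $u_e$ be its endpoint on the path from $r$ to the other endpoint $v_e$. Start with $E = \emptyset$. For the current $E$ and each edge $e$, let $D(e)$ be the set of edges $f$ such that $v_e$ lies on the path from $r$ to $v_f$ and the path from $v_e$ to $v_f$ contains no edge of $E$ (so $e \in D(e)$), and let $w(e) = \sum_{f \in D(e)} \tilde x_f$. While there exists an edge $e$ with $w(e) \ge 1/4$ and $w(f) < 1/4$ for all $f \in D(e) \setminus \{e\}$, add one such edge $e$ to $E$ (recomputing $D$ and $w$ afterwards); stop when every edge $e \in E(T_1) \setminus E$ has $w(e) < 1/4$. Then the final set satisfies $$|E| \le 4 \sum_{e \in E(T_1)} \tilde x_e.$$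
   Context: A (binary) phylogenetic tree on a finite set $X$ is an unrooted tree whose internal vertices have degree 3 and whose leaves are bijectively labelled by $X$. Two phylogenetic trees on $X$ are isomorphic ($\cong$) if there is a graph isomorphism between them fixing every leaf label. For $Y \subseteq X$, $T[Y]$ is the minimal subtree of $T$ connecting the leaves in $Y$, and $T|_Y$ is obtained from $T[Y]$ by suppressing all degree-2 vertices. A quartet is a 4-element subset of $X$; for $Q=\{a,b,c,d\}$, $ab|cd$ is the tree on $Q$ where $a,b$ share a neighbour $u$, $c,d$ share a neighbour $v$, and $u,v$ are adjacent. If $T_1|_Q \cong ab|cd$, $L(Q)$ is the set of edges of $T_1[\{a,b\}] \cup T_1[\{c,d\}]$. $Q$ is an incompatible quartet of $T_1,T_i$ if $T_1|_Q \not\cong T_i|_Q$. *)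

(* Defs.v *)
From HB Require Import structures.
From mathcomp Require Import all_boot all_order all_algebra.
From mathcomp Require Import boolp.
Set Implicit Arguments. Unset Strict Implicit. Unset Printing Implicit Defensive.
Import Order.TTheory GRing.Theory Num.Theory.
Local Open Scope ring_scope.

Section Graph.
Variables (V : finType) (adj : rel V).

Definition is_spath (a b : V) (s : seq V) : Prop :=
  [/\ path adj a s, last a s = b & uniq (a :: s)].

Definition vertex_on_path (a b v : V) : Prop :=
  exists s, is_spath a b s /\ v \in a :: s.

Definition edge_on_path (a b : V) (e : {set V}) : Prop :=
  exists s, is_spath a b s /\ exists2 p, p \in zip (a :: s) s & e = [set p.1; p.2].

Definition deg (v : V) : nat := #|[set w | adj v w]|.

Definition edges : {set {set V}} :=
  [set e | [exists u, exists v, adj u v && (e == [set u; v])]].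

End Graph.

Record ptree (X : finType) := PTree {
  pV : finType;
  padj : rel pV;
  lab : X -> pV;
  padj_sym : symmetric padj;
  padj_irr : irreflexive padj;
  pconn : forall u v : pV, exists s, is_spath padj u v s;
  (* acyclic: simple paths are unique *)
  pacyc : forall (u v : pV) s s', is_spath padj u v s -> is_spath padj u v s' -> s = s';
  lab_inj : injective lab;
  leaves_lab : forall v : pV, deg padj v = 1%N <-> exists x, v = lab x;
  internal_deg3 : forall v : pV, deg padj v != 1%N -> deg padj v = 3%N }.
Arguments pV {X} p.
Arguments padj {X} p.
Arguments lab {X} p.

Section Quartets.
Variables (X : finType).

(* T|_Q is isomorphic to ab|cd, Q = {a,b,c,d} a quartet: the paths a--b and
   c--d of T are vertex-disjoint. *)
Definition restr_is (T : ptree X) (Q : {set X}) (a b c d : X) : Prop :=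
  [/\ #|Q| = 4%N, Q = [set a; b; c; d] &
      forall v, ~ (vertex_on_path (padj T) (lab T a) (lab T b) v /\
                   vertex_on_path (padj T) (lab T c) (lab T d) v)].

(* Q is an incompatible quartet of T1, Ti : T1|_Q is not isomorphic to Ti|_Q *)
Definition incompatible (T1 Ti : ptree X) (Q : {set X}) : Prop :=
  #|Q| = 4%N /\ ~ (forall a b c d, restr_is T1 Q a b c d <-> restr_is Ti Q a b c d).

Definition Lset (T : ptree X) (Q : {set X}) : {set {set pV T}} :=
  [set e | `[< exists a b c d, restr_is T Q a b c d /\
              (edge_on_path (padj T) (lab T a) (lab T b) e \/
               edge_on_path (padj T) (lab T c) (lab T d) e) >]].

Variables (R : realFieldType) (t : nat) (T : 'I_t.+1 -> ptree X).
(* T_1 is T ord0; the trees T_2..T_t are T i, i <> ord0 *)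

Definition quartetsQ (Q : {set X}) : Prop :=
  exists2 i : 'I_t.+1, i != ord0 & incompatible (T ord0) (T i) Q.

Definition lp_feasible (x : {set pV (T ord0)} -> R) : Prop :=
  (forall e, e \in edges (padj (T ord0)) -> 0 <= x e) /\
  (forall Q, quartetsQ Q -> 1 <= \sum_(e in Lset (T ord0) Q) x e).

Definition lp_obj (x : {set pV (T ord0)} -> R) : R :=
  \sum_(e in edges (padj (T ord0))) x e.

Definition lp_optimal (x : {set pV (T ord0)} -> R) : Prop :=
  lp_feasible x /\ forall y, lp_feasible y -> lp_obj x <= lp_obj y.

End Quartets.

Section Rounding.
Variables (V : finType) (adj : rel V) (R : realFieldType) (r : V)
          (x : {set V} -> R).

(* v is the endpoint v_e of the edge e (the other endpoint u_e lies on the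
   path from r to v) *)
Definition lower_end (e : {set V}) (v : V) : Prop :=
  v \in e /\ exists2 u, (u \in e) && (u != v) & vertex_on_path adj r v u.

Definition inD (E : {set {set V}}) (e f : {set V}) : Prop :=
  exists ve vf, [/\ lower_end e ve, lower_end f vf, vertex_on_path adj r vf ve &
     ~ (exists2 g, g \in E & edge_on_path adj ve vf g)].

Definition Dset (E : {set {set V}}) (e : {set V}) : {set {set V}} :=
  [set f in edges adj | `[< inD E e f >]].

Definition wgt (E : {set {set V}}) (e : {set V}) : R :=
  \sum_(f in Dset E e) x f.

(* s lists the edges added by the procedure, in order *)
Definition rounding_run (s : seq {set V}) : Prop :=
  forall k, (k < size s)%N ->
    let E := [set y in take k s] in
    let e := nth set0 s k in
    [/\ e \in edges adj, e \notin E, 1 / 4%:R <= wgt E e &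
        forall f, f \in Dset E e -> f != e -> wgt E f < 1 / 4%:R].

Definition rounding_stopped (s : seq {set V}) : Prop :=
  forall e, e \in edges adj -> e \notin [set y in s] ->
    wgt [set y in s] e < 1 / 4%:R.

End Rounding.
Arguments lp_feasible {X R t} T x.
Arguments lp_obj {X R t} T x.
Arguments lp_optimal {X R t} T x.
Arguments quartetsQ {X t} T Q.

(* Main.v *)
Require Import Defs.
From HB Require Import structures.
From mathcomp Require Import all_boot all_order all_algebra.
From mathcomp Require Import boolp.
From mathcomp Require Import lra.
Set Implicit Arguments. Unset Strict Implicit. Unset Printing Implicit Defensive.
Import Order.TTheory GRing.Theory Num.Theory.
Local Open Scope ring_scope.

Section Geo.
Variables (V : finType) (adj : rel V).
Hypothesis adj_sym : symmetric adj.
Hypothesis acyc : forall (u v : V) s s', is_spath adj u v s -> is_spath adj u v s' -> s = s'.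
Variable r : V.

Lemma spath_cat a b s1 s2 : is_spath adj a b (s1 ++ s2) ->
  is_spath adj a (last a s1) s1 /\ is_spath adj (last a s1) b s2.
Proof.
case; rewrite cat_path last_cat => /andP[p1 p2] l u.
move: u; rewrite -cat_cons cat_uniq => /and3P[u1 nh u2].
split; split => //.
rewrite /= u2 andbT; apply: contra nh => h; apply/hasP; exists (last a s1) => //.
exact: mem_last.
Qed.

Lemma split_spath a b s c : is_spath adj a b s -> c \in a :: s ->
  exists s1 s2, [/\ s = s1 ++ s2, is_spath adj a c s1 & is_spath adj c b s2].
Proof.
move=> h cin; case/splitPl: cin h => s1 s2 lc h.
have [h1 h2] := spath_cat h; rewrite lc in h1 h2.
by exists s1, s2.
Qed.

Lemma zip_cat_cons (a : V) s1 s2 :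
  zip (a :: s1 ++ s2) (s1 ++ s2) = zip (a :: s1) s1 ++ zip (last a s1 :: s2) s2.
Proof. by elim: s1 a => [|b s1 IH] a //=; rewrite IH. Qed.

Lemma vop_antisym a b : vertex_on_path adj r a b -> vertex_on_path adj r b a -> a = b.
Proof.
case=> s [hs bin] [p [hp ain]].
have [s1 [s2 [E h1 h2]]] := split_spath hs bin.
have ps : p = s1 := acyc hp h1. subst.
case: hs => _ _ u; rewrite -cat_cons cat_uniq in u; case/and3P: u => _ nh _.
case: h2 => _ l _.
apply/eqP; apply: contraNT nh => neq.
apply/hasP; exists a => //.
have := mem_last b s2; rewrite l inE (negbTE neq) //.
Qed.

Lemma edge2 f : f \in edges adj -> exists a b, adj a b /\ f = [set a; b].
Proof. by rewrite inE => /existsP[a /existsP[b /andP[h /eqP ->]]]; exists a, b. Qed.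

Lemma edge_pair f u v : f \in edges adj -> u \in f -> v \in f -> u != v ->
  adj u v /\ f = [set u; v].
Proof.
case/edge2 => a [b [hab ->]]; rewrite !in_set2.
case/orP=> /eqP-> /orP[]/eqP->; rewrite ?eqxx // => _.
by rewrite adj_sym setUC.
Qed.

Lemma lower_end_uniq f v1 v2 : f \in edges adj ->
  lower_end adj r f v1 -> lower_end adj r f v2 -> v1 = v2.
Proof.
move=> fe [v1f [u1 /andP[u1f nu1] op1]] [v2f [u2 /andP[u2f nu2] op2]].
apply/eqP; apply/negPn/negP => n12.
have [_ ef] := edge_pair fe v1f v2f n12.
have e1 : u1 = v2.
  by move: u1f; rewrite ef in_set2 => /orP[]/eqP // h; rewrite h eqxx in nu1.
have e2 : u2 = v1.
  by move: u2f; rewrite ef in_set2 => /orP[]/eqP // h; rewrite h eqxx in nu2.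
subst u1 u2; case/negP: n12; apply/eqP; exact: vop_antisym op1 op2.
Qed.

Lemma inD_disj (E1 E2 : {set {set V}}) (e1 e2 f : {set V}) : e1 \in edges adj -> f \in edges adj -> e1 \in E2 ->
  inD adj r E1 e1 f -> inD adj r E2 e2 f -> inD adj r E1 e1 e2.
Proof.
move=> e1E fE e1E2 [ve1 [vf [le1 lf op1 no1]]] [ve2 [vf' [le2 lf' op2 no2]]].
have ? := lower_end_uniq fE lf' lf; subst vf'.
case: op1 => s [hs ve1s]; case: op2 => s' [hs' ve2s].
have ? := acyc hs' hs; subst s'.
have [s1 [s2 [Es h1 h2]]] := split_spath hs ve1s; subst s.
case: (boolP (ve2 \in ve1 :: s2)) => [ve2in | ve2n].
- have [s3 [s4 [Es2 h3 h4]]] := split_spath h2 ve2in; subst s2.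
  exists ve1, ve2; split => //.
  + exists (s1 ++ s3); split; last first.
      by rewrite -cat_cons mem_cat; case: h1 => _ l _; rewrite -{1}l mem_last.
    rewrite catA in hs; have [h _] := spath_cat hs.
    by move: h; rewrite last_cat; case: h1 => _ -> _; case: h3 => _ -> _.
  + move=> [g gE [p [hp [q qin gq]]]]; apply: no1; exists g => //.
    exists (s3 ++ s4); split => //; exists q => //.
    have ? := acyc hp h3; subst p.
    by rewrite zip_cat_cons mem_cat qin.
- have n21 : ve2 != ve1 by apply: contra ve2n => /eqP->; rewrite inE eqxx.
  have ve2s1 : ve2 \in r :: s1.
    move: ve2s; rewrite -cat_cons mem_cat => /orP[] // h.
    by move: ve2n; rewrite inE h orbT.
  case: le1 => ve1e1 [u1 /andP[u1e1 nu1] [p [hp u1p]]].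
  have ? := acyc hp h1; subst p.
  have [t1 [t2 [Es1 h5 h6]]] := split_spath h1 u1p; subst s1.
  have [adj1 e1eq] := edge_pair e1E u1e1 ve1e1 nu1.
  have h7 : is_spath adj u1 ve1 [:: ve1].
    by split; rewrite /= ?adj1 // inE nu1.
  have ? := acyc h6 h7; subst t2.
  have ve2t1 : ve2 \in r :: t1.
    by move: ve2s1; rewrite -cat_cons mem_cat mem_seq1 (negbTE n21) orbF.
  have [t3 [t4 [Et1 h8 h9]]] := split_spath h5 ve2t1; subst t1.
  exfalso; apply: no2; exists e1 => //; exists (t4 ++ ve1 :: s2); split.
    move: hs; rewrite -!catA /= => hs; have [_ h] := spath_cat hs.
    by move: h; case: h8 => _ -> _.
  exists (u1, ve1) => //.
  rewrite zip_cat_cons mem_cat; apply/orP; right.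
  by case: h9 => _ -> _; rewrite /= inE eqxx.
Qed.

Variables (R : realFieldType) (x : {set V} -> R).
Hypothesis x0 : forall e, e \in edges adj -> 0 <= x e.

Lemma Dset_mono (E E' : {set {set V}}) (e f : {set V}) : E \subset E' -> f \in Dset adj r E' e -> f \in Dset adj r E e.
Proof.
move=> sub; rewrite !inE => /andP[fe /asboolP [ve [vf [l1 l2 op no]]]].
rewrite fe /=; apply/asboolP; exists ve, vf; split => // -[g gE h]; apply: no.
by exists g => //; exact: (subsetP sub).
Qed.

Lemma wgt_mono (E E' : {set {set V}}) (e : {set V}) : E \subset E' -> wgt adj r x E' e <= wgt adj r x E e.
Proof.
move=> sub; rewrite /wgt [X in X <= _]big_mkcond [X in _ <= X]big_mkcond /=.
apply: ler_sum => f _.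
case: (boolP (f \in Dset adj r E' e)) => h; first by rewrite (Dset_mono sub h).
case: ifP => // h2; apply: x0; move: h2; rewrite inE => /andP[] //.
Qed.

End Geo.

Theorem lemma4 (R : realFieldType) (X : finType) (t : nat)
  (T : 'I_t.+1 -> ptree X) (xt : {set pV (T ord0)} -> R)
  (r : X) (s : seq {set pV (T ord0)}) :
  lp_optimal T xt ->
  rounding_run (padj (T ord0)) (lab (T ord0) r) xt s ->
  rounding_stopped (padj (T ord0)) (lab (T ord0) r) xt s ->
  (#|[set e in s]|)%:R <= 4%:R * \sum_(e in edges (padj (T ord0))) xt e.
Proof.
move=> [[x0 _] _] run _.
have sym := @padj_sym _ (T ord0); have acyc := @pacyc _ (T ord0).
set adj := padj (T ord0) in run x0 *; set rr := lab (T ord0) r in run *.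
set n := size s.
pose Ek (k : nat) := [set y in take k s].
pose ek (k : nat) := nth set0 s k.
pose Dk (k : nat) := Dset adj rr (Ek k) (ek k).
have disj : forall j k, (j < k)%N -> (k < n)%N -> forall f, f \in Dk j -> f \in Dk k -> False.
  move=> j k jk kn f fj fk.
  have jn : (j < n)%N := ltn_trans jk kn.
  have [ejE _ _ small] := run j jn.
  have [ekE eknE big _] := run k kn.
  have ejk : ek j \in Ek k.
    rewrite inE /ek -(nth_take set0 jk); apply: mem_nth.
    by rewrite size_takel // ltnW.
  have fE : f \in edges adj by move: fj; rewrite inE => /andP[].
  have hD : inD adj rr (Ek j) (ek j) (ek k).
    move: fj fk; rewrite !inE => /andP[_ /asboolP fj] /andP[_ /asboolP fk].
    exact: (inD_disj sym acyc ejE fE ejk fj fk).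
  have ekD : ek k \in Dset adj rr (Ek j) (ek j) by rewrite inE ekE; apply/asboolP.
  have nek : ek k != ek j by apply/eqP => h; move: eknE; rewrite -/(ek k) -/(Ek k) h ejk.
  have := small _ ekD nek.
  have sub : Ek j \subset Ek k.
    apply/subsetP => y; rewrite !inE -(take_takel s (ltnW jk)); exact: mem_take.
  have := @wgt_mono _ adj rr R xt x0 _ _ (ek k) sub.
  rewrite -/(Ek k) -/(ek k) in big.
  move: big; set a := wgt _ _ _ _ _; set b := wgt _ _ _ _ _ => h1 h2 h3.
  lra.
apply: (@le_trans _ _ (n%:R)).
  by rewrite ler_nat cardsE card_size.
apply: (@le_trans _ _ (4%:R * \sum_(k < n) wgt adj rr xt (Ek k) (ek k))).
  rewrite -[X in X%:R]card_ord -sumr_const mulr_sumr; apply: ler_sum => k _.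
  have [_ _ big _] := run k (ltn_ord k).
  move: big; set a := wgt _ _ _ _ _ => h; lra.
have h4 : (0 : R) <= 4%:R by rewrite ler0n.
apply: ler_wpM2l => //.
rewrite /wgt.
under eq_bigr do rewrite big_mkcond.
rewrite exchange_big /= [X in _ <= X]big_mkcond; apply: ler_sum => f _.
case: (pickP (fun k : 'I_n => f \in Dk k)) => [k0 fk0 | none].
- rewrite (bigD1 k0) //= -/(Dk k0) fk0.
  have fE : f \in edges adj by move: fk0; rewrite inE => /andP[].
  rewrite fE big1 ?addr0 // => k nk; rewrite -/(Dk k); case: ifP => // fk.
  exfalso; case: (ltngtP k k0) => [lt|gt|eq].
  + exact: (disj _ _ lt (ltn_ord k0) f fk fk0).
  + exact: (disj _ _ gt (ltn_ord k) f fk0 fk).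
  + by move: nk; rewrite (val_inj eq) eqxx.
- rewrite big1; first by case: ifP => // h; exact: x0.
  by move=> k _; have := none k; rewrite -/(Dk k) /= => ->.
Qed.
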